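(* Let $G$ be a finite group and $\varphi\colon T\to S$ a morphism of $G$-Tambara functors. Then the map \[ \widetilde\varphi\colon \mathrm{RadId}_G(T)\to\mathrm{RadId}_G(S),\qquad I\mapsto\sqrt{\varphi_*(I)}, \] is a frame homomorphism (it preserves arbitrary joins, finite meets and the top element).
   Context: All rings are commutative with unit. A $G$-Tambara functor $T$ consists of commutative rings $T(G/H)$ for subgroups $H\le G$ with restriction ring maps, additive transfer maps, multiplicative norm maps and conjugation isomorphisms satisfying the standard Tambara axioms (Hill–Mazur). A morphism $\varphi\colon T\to S$ is a family of ring homomorphisms $\varphi_H$ commuting with all structure maps. A Tambara ideal is a family of ring ideals closed under restriction, transfer, norm and conjugation. For a Tambara ideal $I$ of $T$, $\varphi_*(I)$ is the Tambara ideal of $S$ generated by the subsets $\varphi_H(I(G/H))$. Products of Tambara ideals are generated by levelwise products; $\langle x\rangle$ is the Tambara ideal generated by $x$. The radical $\sqrt I$ has $\sqrt I(G/H)=\{x\mid\langle x\rangle^n\subseteq I\text{ for some }n\ge1\}$; $I$ is radical if $I=\sqrt I$. $\mathrm{RadId}_G(T)$ is the set of radical Tambara ideals ordered by inclusion, a frame with meets intersections and joins $\bigvee_\lambda I_\lambda=\sqrt{\sum_\lambda I_\lambda}$ (levelwise sum). *)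

(* Defs.v *)
(* G-Tambara functors in the restriction/transfer/norm/
   conjugation presentation of Hill--Mazur, for the finite group
   G = [set: gT] of a finGroupType gT.  Conjugation follows mathcomp's right
   action convention: H :^ g = g^-1 H g, and cj g : T(H) -> T(H :^ g).    *)
From HB Require Import structures.
From mathcomp Require Import all_boot all_order all_algebra all_fingroup.
From Stdlib Require List.
Set Implicit Arguments.
Unset Strict Implicit.
Unset Printing Implicit Defensive.
Import GRing.Theory.
Local Open Scope ring_scope.

Definition pick_in (X : finType) (A : {set X}) (d : X) : X :=
  odflt d [pick x in A].

(* raw data: levels, restriction, transfer, norm, conjugation.
   tres H K : T(K) -> T(H), ttr H K, tnm H K : T(H) -> T(K) (meaningful for
   H \subset K); tcj g H K : T(H) -> T(K) (meaningful for K = H :^ g). *)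
Record tdata (gT : finGroupType) := TData {
  tT  : {group gT} -> comPzRingType;
  tres : forall H K : {group gT}, tT K -> tT H;
  ttr  : forall H K : {group gT}, tT H -> tT K;
  tnm  : forall H K : {group gT}, tT H -> tT K;
  tcj  : gT -> forall H K : {group gT}, tT H -> tT K }.

Arguments tT {gT} t H.
Arguments tres {gT} t H K.
Arguments ttr {gT} t H K.
Arguments tnm {gT} t H K.
Arguments tcj {gT} t g H K.

Section Tambara.
Variable gT : finGroupType.
Implicit Types (H K L : {group gT}) (g x : gT).

Definition dcosets (H L K : {set gT}) : {set {set gT}} :=
  [set [set (h * x * l)%g | h in H, l in L] | x in K].

Variable D : tdata gT.
Local Notation T := (tT D).
Local Notation res := (tres D).
Local Notation tr := (ttr D).
Local Notation nm := (tnm D).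
Local Notation cj := (tcj D).

Definition ring_hom (R S : comPzRingType) (f : R -> S) : Prop :=
  [/\ forall a b, f (a + b) = f a + f b,
      forall a b, f (a * b) = f a * f b & f 1 = 1].

Definition conj_axioms : Prop :=
  [/\ forall g H K, (K :=: H :^ g)%g -> ring_hom (cj g H K),
      forall H h (a : T H), h \in H -> cj h H H a = a &
      forall g h H K L (a : T H), (K :=: H :^ g)%g -> (L :=: K :^ h)%g ->
        cj h K L (cj g H K a) = cj (g * h)%g H L a].

Definition rtn_axioms : Prop :=
  [/\ [/\ forall H (a : T H), res H H a = a,
          forall H (a : T H), tr H H a = a,
          forall H (a : T H), nm H H a = a,
          forall H K, (H \subset K)%g -> ring_hom (res H K) &
          forall H K, (H \subset K)%g ->
            (forall a b, tr H K (a + b) = tr H K a + tr H K b) /\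
            (forall a b, nm H K (a * b) = nm H K a * nm H K b) /\
            nm H K 1 = 1],
      forall H K L (a : T L), (H \subset K)%g -> (K \subset L)%g ->
        res H K (res K L a) = res H L a,
      forall H K L (a : T H), (H \subset K)%g -> (K \subset L)%g ->
        tr K L (tr H K a) = tr H L a &
      forall H K L (a : T H), (H \subset K)%g -> (K \subset L)%g ->
        nm K L (nm H K a) = nm H L a].

Definition conj_compat_axioms : Prop :=
  forall g H K H' K', (H \subset K)%g -> (H' :=: H :^ g)%g -> (K' :=: K :^ g)%g ->
  [/\ forall a : T K, cj g H H' (res H K a) = res H' K' (cj g K K' a),
      forall a : T H, cj g K K' (tr H K a) = tr H' K' (cj g H H' a) &
      forall a : T H, cj g K K' (nm H K a) = nm H' K' (cj g H H' a)].

Definition frobenius_axiom : Prop :=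
  forall H K (a : T H) (b : T K), (H \subset K)%g ->
    tr H K a * b = tr H K (a * res H K b).

Definition mackey_axioms : Prop :=
  forall H L K (a : T H), (H \subset K)%g -> (L \subset K)%g ->
  res L K (tr H K a) =
    \sum_(C in dcosets H L K)
       tr (L :&: H :^ pick_in C 1%g)%G L
          (res (L :&: H :^ pick_in C 1%g)%G (H :^ pick_in C 1%g)%G
               (cj (pick_in C 1%g) H (H :^ pick_in C 1%g)%G a))
  /\
  res L K (nm H K a) =
    \prod_(C in dcosets H L K)
       nm (L :&: H :^ pick_in C 1%g)%G L
          (res (L :&: H :^ pick_in C 1%g)%G (H :^ pick_in C 1%g)%G
               (cj (pick_in C 1%g) H (H :^ pick_in C 1%g)%G a)).

(* stabiliser in K of a set S of cosets, for the right translation action *)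
Definition stabS (K : {group gT}) (S : {set {set gT}}) : {group gT} :=
  ('C_K[S | ('Rs)^*])%G.

Definition orbitsS (K : {group gT}) (X : {set {set {set gT}}}) :=
  [set orbit ('Rs)^* K S | S in X].

Definition orbitsC (KS H K : {group gT}) : {set {set {set gT}}} :=
  [set orbit 'Rs KS C | C in rcosets H K].

(* one factor of the exponential formula: the orbit O of the coset
   C = H x (x := representative), norm from KS :&: H^x to KS of the
   restriction of cj x a. *)
Definition nfactor (KS H : {group gT}) (O : {set {set gT}}) (a : T H) : T KS :=
  let x := pick_in (pick_in O (H : {set gT})) 1%g in
  nm (KS :&: H :^ x)%G KS
     (res (KS :&: H :^ x)%G (H :^ x)%G (cj x H (H :^ x)%G a)).

Definition norm_sum_axiom : Prop :=
  forall H K (a b : T H), (H \subset K)%g ->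
  nm H K (a + b) =
    \sum_(OS in orbitsS K (powerset (rcosets H K)))
      let S := pick_in OS set0 in
      tr (stabS K S) K
        (\prod_(O in orbitsC (stabS K S) H K)
           nfactor (stabS K S) O
             (if pick_in O (H : {set gT}) \in S then b else a)).

(* sections of the projection L\K -> H\K, as sets of L-cosets *)
Definition sections (L H K : {set gT}) : {set {set {set gT}}} :=
  [set S in powerset (rcosets L K) |
     [forall C in rcosets H K, #|[set E in S | E \subset C]| == 1%N]].

Definition norm_tr_axiom : Prop :=
  forall L H K (a : T L), (L \subset H)%g -> (H \subset K)%g ->
  nm H K (tr L H a) =
    \sum_(OS in orbitsS K (sections L H K))
      let S := pick_in OS set0 in
      let KS := stabS K S in
      tr KS K
        (\prod_(O in orbitsC KS H K)
           let C := pick_in O (H : {set gT}) in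
           let x := pick_in C 1%g in
           let y := pick_in (pick_in [set E in S | E \subset C]
                                     (L : {set gT})) 1%g in
           nm (KS :&: H :^ x)%G KS
              (res (KS :&: H :^ x)%G (L :^ y)%G (cj y L (L :^ y)%G a))).

Definition tambara_axioms : Prop :=
  [/\ conj_axioms, rtn_axioms, conj_compat_axioms, frobenius_axiom &
      [/\ mackey_axioms, norm_sum_axiom & norm_tr_axiom]].

End Tambara.


Record tambara (gT : finGroupType) := Tambara {
  tdata_of :> tdata gT;
  tambara_ax : tambara_axioms tdata_of }.

Section Ideals.
Variable gT : finGroupType.
Implicit Types (H K : {group gT}) (g : gT).

Definition tfam (T : tdata gT) := forall H : {group gT}, tT T H -> Prop.

Definition fsub (T : tdata gT) (I J : tfam T) : Prop :=
  forall H x, I H x -> J H x.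
Definition feq (T : tdata gT) (I J : tfam T) : Prop :=
  forall H x, I H x <-> J H x.

Definition is_tideal (T : tdata gT) (I : tfam T) : Prop :=
  [/\ forall H, I H 0,
      forall H x y, I H x -> I H y -> I H (x + y),
      forall H (r x : tT T H), I H x -> I H (r * x),
      forall H K x, (H \subset K)%g -> I K x -> I H (tres T H K x) &
  [/\ forall H K x, (H \subset K)%g -> I H x -> I K (ttr T H K x),
      forall H K x, (H \subset K)%g -> I H x -> I K (tnm T H K x) &
      forall g H K x, (K :=: H :^ g)%g -> I H x -> I K (tcj T g H K x)]].

Definition tgen (T : tdata gT) (A : tfam T) : tfam T :=
  fun H x => forall J : tfam T, is_tideal J -> fsub A J -> J H x.

Definition tgen1 (T : tdata gT) (H : {group gT}) (x : tT T H) : tfam T :=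
  tgen (fun (K : {group gT}) (y : tT T K) => exists e : H = K, y = ecast Z (tT T Z) e x).

Definition tmul (T : tdata gT) (I J : tfam T) : tfam T :=
  tgen (fun H z => exists x y, [/\ I H x, J H y & z = x * y]).

(* powers I^(n+1) *)
Fixpoint tpow (T : tdata gT) (I : tfam T) (n : nat) : tfam T :=
  if n is m.+1 then tmul (tpow I m) I else I.

Definition trad (T : tdata gT) (I : tfam T) : tfam T :=
  fun H x => exists n : nat, fsub (tpow (tgen1 x) n) I.

Definition is_radical_tideal (T : tdata gT) (I : tfam T) : Prop :=
  is_tideal I /\ feq I (trad I).

Definition tsum (T : tdata gT) (Lam : Type) (F : Lam -> tfam T) : tfam T :=
  fun H z => exists s : seq (Lam * tT T H),
    (forall p, List.In p s -> F p.1 H p.2) /\ z = \sum_(p <- s) p.2.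

Definition tjoin (T : tdata gT) (Lam : Type) (F : Lam -> tfam T) : tfam T :=
  trad (tsum F).

Definition tmeet (T : tdata gT) (I J : tfam T) : tfam T :=
  fun H x => I H x /\ J H x.

Definition ttop (T : tdata gT) : tfam T := fun _ _ => True.

Definition is_tmorph (T S : tdata gT) (f : forall H, tT T H -> tT S H) : Prop :=
  [/\ forall H, ring_hom (f H),
      forall H K x, (H \subset K)%g -> f H (tres T H K x) = tres S H K (f K x),
      forall H K x, (H \subset K)%g -> f K (ttr T H K x) = ttr S H K (f H x),
      forall H K x, (H \subset K)%g -> f K (tnm T H K x) = tnm S H K (f H x) &
      forall g H K x, (K :=: H :^ g)%g -> f K (tcj T g H K x) = tcj S g H K (f H x)].

Definition tpush (T S : tdata gT) (f : forall H, tT T H -> tT S H) (I : tfam T)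
  : tfam S := tgen (fun H y => exists x, I H x /\ y = f H x).

Definition tphi (T S : tdata gT) (f : forall H, tT T H -> tT S H) (I : tfam T)
  : tfam S := trad (tpush f I).

End Ideals.
Arguments ttop {gT} T _ _.

(* Main.v *)
Require Import Defs.
Set Warnings "-notation-overridden,-ambiguous-paths,-notation-incompatible-prefix".
From mathcomp Require Import all_boot all_order all_algebra all_fingroup.
From Stdlib Require List.
From mathcomp Require Import zify.
From Stdlib Require Import Lia.

Module Part1.
Unset Implicit Arguments.
Unset Printing Implicit Defensive.
Import GRing.Theory.
Local Open Scope ring_scope.

Section Generic.
Variable gT : finGroupType.
Variable D : tdata gT.
Implicit Types (I J A B : tfam D) (H K : {group gT}).

Lemma fsub_refl A : fsub A A. Proof. by []. Qed.
Lemma fsub_trans A B (C : tfam D) : fsub A B -> fsub B C -> fsub A C.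
Proof. by move=> h1 h2 H x /h1 /h2. Qed.

Section Ideal.
Variable I : tfam D.
Hypothesis hI : is_tideal I.
Lemma id0 H : I H 0. Proof. by case: hI. Qed.
Lemma idD H x y : I H x -> I H y -> I H (x + y). Proof. by case: hI => _ h *; apply: h. Qed.
Lemma idMl H r x : I H x -> I H (r * x). Proof. by case: hI => _ _ h *; apply: h. Qed.
Lemma idMr H r x : I H x -> I H (x * r). Proof. by rewrite mulrC; apply: idMl. Qed.
Lemma idres H K x : (H \subset K)%g -> I K x -> I H (tres D H K x).
Proof. by case: hI => _ _ _ h *; apply: h. Qed.
Lemma idtr H K x : (H \subset K)%g -> I H x -> I K (ttr D H K x).
Proof. by case: hI => _ _ _ _ [h *]; apply: h. Qed.
Lemma idnm H K x : (H \subset K)%g -> I H x -> I K (tnm D H K x).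
Proof. by case: hI => _ _ _ _ [_ h *]; apply: h. Qed.
Lemma idcj g H K x : (K :=: H :^ g)%g -> I H x -> I K (tcj D g H K x).
Proof. by case: hI => _ _ _ _ [_ _ h *]; apply: h. Qed.
Lemma id_sum H (s : seq (tT D H)) : (forall z, z \in s -> I H z) -> I H (\sum_(z <- s) z).
Proof.
elim: s => [|a s IH] h; first by rewrite big_nil; apply: id0.
rewrite big_cons; apply: idD; first by apply: h; rewrite inE eqxx.
by apply: IH => z zs; apply: h; rewrite inE zs orbT.
Qed.
End Ideal.

Lemma tgen_ideal A : is_tideal (tgen A).
Proof.
split.
- by move=> H J hJ _; apply: id0.
- by move=> H x y hx hy J hJ hA; apply: idD => //; [apply: hx | apply: hy].
- by move=> H r x hx J hJ hA; apply: idMl => //; apply: hx.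
- by move=> H K x hHK hx J hJ hA; apply: idres => //; apply: hx.
split.
- by move=> H K x hHK hx J hJ hA; apply: idtr => //; apply: hx.
- by move=> H K x hHK hx J hJ hA; apply: idnm => //; apply: hx.
- by move=> g H K x hK hx J hJ hA; apply: idcj => //; apply: hx.
Qed.

Lemma tgen_sub A : fsub A (tgen A).
Proof. by move=> H x hx J _ hA; apply: hA. Qed.

Lemma tgen_min A J : is_tideal J -> fsub A J -> fsub (tgen A) J.
Proof. by move=> hJ hA H x hx; apply: hx. Qed.

Lemma tgen_mono A B : fsub A B -> fsub (tgen A) (tgen B).
Proof. by move=> hAB; apply: tgen_min; [apply: tgen_ideal | apply: fsub_trans hAB (@tgen_sub B)]. Qed.

Lemma tgen1_self H (x : tT D H) : tgen1 x x.
Proof. by apply: tgen_sub; exists erefl. Qed.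

Lemma tgen1_min J H (x : tT D H) : is_tideal J -> J H x -> fsub (tgen1 x) J.
Proof. by move=> hJ hx; apply: tgen_min => // K y [e ey]; subst y; case: K / e. Qed.

Lemma tgen1_sub H (x : tT D H) K (y : tT D K) : tgen1 x y -> fsub (tgen1 y) (tgen1 x).
Proof. by move=> hy; apply: tgen1_min => //; apply: tgen_ideal. Qed.

Lemma tmul_ideal I J : is_tideal (tmul I J). Proof. exact: tgen_ideal. Qed.

Lemma tmul_gen I J H x y : I H x -> J H y -> tmul I J (x * y).
Proof. by move=> hx hy; apply: tgen_sub; exists x, y. Qed.

Lemma tmul_subl I J : is_tideal I -> fsub (tmul I J) I.
Proof. by move=> hI; apply: tgen_min => // H z [x [y [hx hy ->]]]; apply: idMr. Qed.

Lemma tmul_subr I J : is_tideal J -> fsub (tmul I J) J.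
Proof. by move=> hJ; apply: tgen_min => // H z [x [y [hx hy ->]]]; apply: idMl. Qed.

Lemma tmul_mono I I' J J' : fsub I I' -> fsub J J' -> fsub (tmul I J) (tmul I' J').
Proof.
move=> h1 h2; apply: tgen_min; first exact: tmul_ideal.
by move=> H z [x [y [hx hy ->]]]; apply: tmul_gen; [apply: h1 | apply: h2].
Qed.

Lemma tpow_ideal I n : is_tideal I -> is_tideal (tpow I n).
Proof. by case: n => [|n] //= _; apply: tmul_ideal. Qed.

Lemma tpow_mono I J n : fsub I J -> fsub (tpow I n) (tpow J n).
Proof. by move=> h; elim: n => [|n IH] //=; apply: tmul_mono. Qed.

Lemma tpow_sub I n : is_tideal I -> fsub (tpow I n) I.
Proof. by move=> hI; elim: n => [|n IH] //=; apply: tmul_subr. Qed.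

Lemma tpowS_sub I n : is_tideal I -> fsub (tpow I n.+1) (tpow I n).
Proof. by move=> hI /=; apply: tmul_subl; apply: tpow_ideal. Qed.

Lemma tpow_le I m n : is_tideal I -> (m <= n)%N -> fsub (tpow I n) (tpow I m).
Proof.
move=> hI; elim: n => [|n IH]; first by rewrite leqn0 => /eqP ->.
rewrite leq_eqVlt => /orP [/eqP -> //|]; rewrite ltnS => /IH.
by apply: fsub_trans; apply: tpowS_sub.
Qed.

Lemma prod_tpow I H (s : seq (tT D H)) n : is_tideal I ->
  (forall z, z \in s -> I H z) -> (n < size s)%N -> tpow I n (\prod_(z <- s) z).
Proof.
move=> hI; elim: n s => [|n IH] [|a s] //= hs hn.
  by rewrite big_cons; apply: idMr => //; apply: hs; rewrite inE eqxx.
rewrite big_cons mulrC; apply: tmul_gen; last by apply: hs; rewrite inE eqxx.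
by apply: IH => // z zs; apply: hs; rewrite inE zs orbT.
Qed.

Lemma trad_mono A B : fsub A B -> fsub (trad A) (trad B).
Proof. by move=> h H x [n hn]; exists n; apply: fsub_trans h. Qed.

Lemma ideal_sub_trad I : is_tideal I -> fsub I (trad I).
Proof. by move=> hI H x hx; exists 0%N => /=; apply: tgen1_min. Qed.

Lemma trad_op A H K (x : tT D H) (y : tT D K) :
  tgen1 x y -> trad A x -> trad A y.
Proof.
move=> hy [n hn]; exists n; apply: fsub_trans hn; apply: tpow_mono.
exact: tgen1_sub.
Qed.

End Generic.

Arguments fsub_refl {gT D} A.
Arguments fsub_trans {gT D A B C}.
Arguments id0 {gT D I} hI H.
Arguments idD {gT D I} hI {H x y}.
Arguments idMl {gT D I} hI {H} r {x}.
Arguments idMr {gT D I} hI {H} r {x}.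
Arguments idres {gT D I} hI {H K x}.
Arguments idtr {gT D I} hI {H K x}.
Arguments idnm {gT D I} hI {H K x}.
Arguments idcj {gT D I} hI {g H K x}.
Arguments id_sum {gT D I} hI {H s}.
Arguments tgen_ideal {gT D} A.
Arguments tgen_sub {gT D} A.
Arguments tgen_min {gT D A J}.
Arguments tgen_mono {gT D A B}.
Arguments tgen1_self {gT D H} x.
Arguments tgen1_min {gT D J H x}.
Arguments tgen1_sub {gT D H x K y}.
Arguments tmul_ideal {gT D} I J.
Arguments tmul_gen {gT D I J H x y}.
Arguments tmul_subl {gT D I} J.
Arguments tmul_subr {gT D} I {J}.
Arguments tmul_mono {gT D I I' J J'}.
Arguments tpow_ideal {gT D I} n.
Arguments tpow_mono {gT D I J} n.
Arguments tpow_sub {gT D I} n.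
Arguments tpowS_sub {gT D I} n.
Arguments tpow_le {gT D I m n}.
Arguments prod_tpow {gT D I H s n}.
Arguments trad_mono {gT D A B}.
Arguments ideal_sub_trad {gT D I}.
Arguments trad_op {gT D A H K x y}.

End Part1.
Import Part1.

Module Part2.
Set Implicit Arguments. Unset Strict Implicit. Unset Printing Implicit Defensive.
Import GRing.Theory.
Local Open Scope ring_scope.

Section RH.
Variables (R S : comPzRingType) (f : R -> S).
Lemma add0_of : (forall a b, f (a + b) = f a + f b) -> f 0 = 0.
Proof. by move=> h; have e := h 0 0; rewrite addr0 in e; apply: (addrI (f 0)); rewrite addr0 -e. Qed.
Lemma add_sum_of I (s : seq I) (P : pred I) (F : I -> R) :
  (forall a b, f (a + b) = f a + f b) -> f (\sum_(i <- s | P i) F i) = \sum_(i <- s | P i) f (F i).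
Proof. by move=> h; apply: (big_morph f h (add0_of h)). Qed.
Lemma mul_prod_of I (s : seq I) (P : pred I) (F : I -> R) :
  (forall a b, f (a * b) = f a * f b) -> f 1 = 1 ->
  f (\prod_(i <- s | P i) F i) = \prod_(i <- s | P i) f (F i).
Proof. by move=> h h1; apply: (big_morph f h h1). Qed.
Hypothesis hf : ring_hom f.
Lemma rhD a b : f (a + b) = f a + f b. Proof. by case: hf. Qed.
Lemma rhM a b : f (a * b) = f a * f b. Proof. by case: hf. Qed.
Lemma rh1 : f 1 = 1. Proof. by case: hf. Qed.
Lemma rh0 : f 0 = 0. Proof. exact: add0_of rhD. Qed.
Lemma rhX a n : f (a ^+ n) = f a ^+ n.
Proof. by elim: n => [|n IH]; rewrite ?expr0 ?rh1 // !exprS rhM IH. Qed.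
Lemma rh_sum I (s : seq I) (P : pred I) (F : I -> R) :
  f (\sum_(i <- s | P i) F i) = \sum_(i <- s | P i) f (F i).
Proof. exact: add_sum_of rhD. Qed.
Lemma rh_prod I (s : seq I) (P : pred I) (F : I -> R) :
  f (\prod_(i <- s | P i) F i) = \prod_(i <- s | P i) f (F i).
Proof. exact: mul_prod_of rhM rh1. Qed.
End RH.

Section Ax.
Variable gT : finGroupType.
Variable T : tambara gT.
Implicit Types (H K L : {group gT}) (g : gT).
Local Notation res := (tres T).
Local Notation tr := (ttr T).
Local Notation nm := (tnm T).
Local Notation cj := (tcj T).

Let ax := tambara_ax T.

Lemma res_id H a : res H H a = a. Proof. by case: ax => _ [[h *] *]; apply: h. Qed.
Lemma tr_id H a : tr H H a = a. Proof. by case: ax => _ [[_ h *] *]; apply: h. Qed.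
Lemma nm_id H a : nm H H a = a. Proof. by case: ax => _ [[_ _ h *] *]; apply: h. Qed.
Lemma res_hom H K : (H \subset K)%g -> ring_hom (res H K).
Proof. by move=> *; case: ax => _ [[_ _ _ h *] *]; apply: h. Qed.
Lemma trD H K : (H \subset K)%g -> forall a b, tr H K (a + b) = tr H K a + tr H K b.
Proof. by move=> hHK; case: ax => _ [[_ _ _ _ h] _ _ _] _ _ _; case: (h _ _ hHK) => h1 _; exact: h1. Qed.
Lemma nmM H K : (H \subset K)%g -> forall a b, nm H K (a * b) = nm H K a * nm H K b.
Proof. by move=> hHK; case: ax => _ [[_ _ _ _ h] _ _ _] _ _ _; case: (h _ _ hHK) => _ [h1 _]; exact: h1. Qed.
Lemma nm1 H K : (H \subset K)%g -> nm H K 1 = 1.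
Proof. by move=> hHK; case: ax => _ [[_ _ _ _ h] _ _ _] _ _ _; case: (h _ _ hHK) => _ [_ h1]; exact: h1. Qed.
Lemma tr0 H K : (H \subset K)%g -> tr H K 0 = 0.
Proof. by move=> h; apply: (add0_of (trD h)). Qed.
Lemma tr_sum H K I (s : seq I) (P : pred I) (F : I -> tT T H) : (H \subset K)%g ->
  tr H K (\sum_(i <- s | P i) F i) = \sum_(i <- s | P i) tr H K (F i).
Proof. by move=> h; apply: (add_sum_of s P F (trD h)). Qed.
Lemma nm_prod H K I (s : seq I) (P : pred I) (F : I -> tT T H) : (H \subset K)%g ->
  nm H K (\prod_(i <- s | P i) F i) = \prod_(i <- s | P i) nm H K (F i).
Proof. by move=> h; apply: (mul_prod_of s P F (nmM h) (nm1 h)). Qed.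
Lemma nmX H K a n : (H \subset K)%g -> nm H K (a ^+ n) = nm H K a ^+ n.
Proof. by move=> h; elim: n => [|n IH]; rewrite ?expr0 ?nm1 // !exprS nmM // IH. Qed.
Lemma res_trans H K L a : (H \subset K)%g -> (K \subset L)%g -> res H K (res K L a) = res H L a.
Proof. by move=> *; case: ax => _ [_ h *]; apply: h. Qed.
Lemma tr_trans H K L a : (H \subset K)%g -> (K \subset L)%g -> tr K L (tr H K a) = tr H L a.
Proof. by move=> *; case: ax => _ [_ _ h *]; apply: h. Qed.
Lemma nm_trans H K L a : (H \subset K)%g -> (K \subset L)%g -> nm K L (nm H K a) = nm H L a.
Proof. by move=> *; case: ax => _ [_ _ _ h] *; apply: h. Qed.
Lemma cj_hom g H K : (K :=: H :^ g)%g -> ring_hom (cj g H K).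
Proof. by move=> *; case: ax => [[h *] *]; apply: h. Qed.
Lemma cj_in h H a : h \in H -> cj h H H a = a.
Proof. by move=> *; case: ax => [[_ hh *] *]; apply: hh. Qed.
Lemma cj_comp g h H K L a : (K :=: H :^ g)%g -> (L :=: K :^ h)%g ->
  cj h K L (cj g H K a) = cj (g * h)%g H L a.
Proof. by move=> *; case: ax => [[_ _ hh] *]; apply: hh. Qed.
Lemma compat_res g H K H' K' a : (H \subset K)%g -> (H' :=: H :^ g)%g -> (K' :=: K :^ g)%g ->
  cj g H H' (res H K a) = res H' K' (cj g K K' a).
Proof. by move=> h2 h3 h4; case: ax => _ _ h _ _; case: (h g H K H' K') => // h1 _ _; apply: h1. Qed.
Lemma compat_tr g H K H' K' a : (H \subset K)%g -> (H' :=: H :^ g)%g -> (K' :=: K :^ g)%g ->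
  cj g K K' (tr H K a) = tr H' K' (cj g H H' a).
Proof. by move=> h2 h3 h4; case: ax => _ _ h _ _; case: (h g H K H' K') => // _ h1 _; apply: h1. Qed.
Lemma compat_nm g H K H' K' a : (H \subset K)%g -> (H' :=: H :^ g)%g -> (K' :=: K :^ g)%g ->
  cj g K K' (nm H K a) = nm H' K' (cj g H H' a).
Proof. by move=> h2 h3 h4; case: ax => _ _ h _ _; case: (h g H K H' K') => // _ _ h1; apply: h1. Qed.
Lemma frob H K a b : (H \subset K)%g -> tr H K a * b = tr H K (a * res H K b).
Proof. by move=> *; case: ax => _ _ _ h *; apply: h. Qed.
Lemma mackey_tr H L K a : (H \subset K)%g -> (L \subset K)%g ->
  res L K (tr H K a) =
    \sum_(C in dcosets H L K)
       tr (L :&: H :^ pick_in C 1%g)%G L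
          (res (L :&: H :^ pick_in C 1%g)%G (H :^ pick_in C 1%g)%G
               (cj (pick_in C 1%g) H (H :^ pick_in C 1%g)%G a)).
Proof. by move=> h1 h2; case: ax => _ _ _ _ [h _ _]; case: (h H L K a). Qed.
Lemma mackey_nm H L K a : (H \subset K)%g -> (L \subset K)%g ->
  res L K (nm H K a) =
    \prod_(C in dcosets H L K)
       nm (L :&: H :^ pick_in C 1%g)%G L
          (res (L :&: H :^ pick_in C 1%g)%G (H :^ pick_in C 1%g)%G
               (cj (pick_in C 1%g) H (H :^ pick_in C 1%g)%G a)).
Proof. by move=> h1 h2; case: ax => _ _ _ _ [h _ _]; case: (h H L K a). Qed.
Lemma norm_sum : norm_sum_axiom T. Proof. by case: ax => _ _ _ _ []. Qed.
Lemma norm_tr : norm_tr_axiom T. Proof. by case: ax => _ _ _ _ []. Qed.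
End Ax.

End Part2.
Import Part2.

Module Part3.
Set Implicit Arguments. Unset Strict Implicit. Unset Printing Implicit Defensive.
Local Open Scope group_scope.

Lemma pick_inP (X : finType) (A : {set X}) d : A != set0 -> pick_in A d \in A.
Proof.
rewrite /pick_in; case: pickP => [a -> //|h /set0Pn [a]].
by rewrite h.
Qed.

Lemma pick_in1 (X : finType) (a d : X) : pick_in [set a] d = a.
Proof. by apply/set1P; apply: pick_inP; apply/set0Pn; exists a; apply: set11. Qed.

Section Comb.
Variable gT : finGroupType.
Implicit Types (H K L KS : {group gT}) (x y k : gT) (S O : {set {set gT}}) (E C : {set gT}) (OS : {set {set {set gT}}}).

Lemma gval_eq (G1 G2 : {group gT}) : G1 :=: G2 -> G1 = G2.
Proof. by move=> e; apply: val_inj. Qed.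

Lemma rcoset_in H K x : x \in K -> H :* x \in rcosets H K.
Proof. by move=> xK; apply/imsetP; exists x; rewrite ?rcosetE. Qed.

Lemma rcosetsP H K C : reflect (exists2 z, z \in K & C = H :* z) (C \in rcosets H K).
Proof.
apply: (iffP imsetP) => [[z zK ->]|[z zK ->]]; exists z; rewrite ?rcosetE //.
Qed.

Lemma rcosets_act H K C k : C \in rcosets H K -> k \in K -> C :* k \in rcosets H K.
Proof.
by case/rcosetsP => z zK -> kK; rewrite -rcosetM; apply: rcoset_in; rewrite groupM.
Qed.

Lemma rcosets_fix H K k : k \in K -> [set E :* k | E in rcosets H K] = rcosets H K.
Proof.
move=> kK; apply/setP => E; apply/imsetP/idP => [[E' hE' ->]|hE].
  exact: rcosets_act.
exists (E :* k^-1); first by apply: rcosets_act; rewrite ?groupV.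
by rewrite rcosetKV.
Qed.

Lemma orbitsC_H KS H K : orbit 'Rs KS (H : {set gT}) \in orbitsC KS H K.
Proof. by apply/imsetP; exists (H : {set gT}) => //; have := rcoset_in H (group1 K); rewrite rcoset1. Qed.

Lemma orbitsC_neq0 KS H K : orbitsC KS H K != set0.
Proof. by apply/set0Pn; exists (orbit 'Rs KS (H : {set gT})); apply: orbitsC_H. Qed.

Lemma orbitsC_pick KS H K O : KS \subset K -> H \subset K -> O \in orbitsC KS H K ->
  [/\ pick_in O (H : {set gT}) \in rcosets H K,
      pick_in (pick_in O (H : {set gT})) 1 \in K &
      pick_in O (H : {set gT}) = H :* pick_in (pick_in O (H : {set gT})) 1].
Proof.
move=> sKS sHK /imsetP [C0 /rcosetsP [y yK ->] ->].
set C := pick_in _ _.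
have : C \in orbit 'Rs KS (H :* y).
  by apply: pick_inP; apply/set0Pn; exists (H :* y); apply: orbit_refl.
case/imsetP => k kKS /= eC; rewrite rcosetE -rcosetM in eC.
have ykK : y * k \in K by rewrite groupM // (subsetP sKS).
have xC : pick_in C 1 \in H :* (y * k).
  by rewrite -eC; apply: pick_inP; apply/set0Pn; exists (y * k); rewrite eC rcoset_refl.
have eC' : H :* pick_in C 1 = H :* (y * k) by apply/rcoset_eqP.
split.
- by rewrite eC; apply: rcoset_in.
- move: xC; rewrite mem_rcoset => h.
  by rewrite -(mulgKV (y * k) (pick_in C 1)) groupM // (subsetP sHK).
- by rewrite eC'.
Qed.

Lemma RsE E k : ('Rs)%act E k = E :* k.
Proof. by rewrite /= rcosetE. Qed.

Lemma setactRs S k : setact 'Rs S k = [set E :* k | E in S].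
Proof. by apply/setP => E; rewrite /setact; apply/imsetP/imsetP => [] [E' h ->]; exists E'; rewrite ?RsE. Qed.

Lemma stabSP K S k : reflect (k \in K /\ [set E :* k | E in S] = S) (k \in stabS K S).
Proof.
apply: (iffP idP) => [h|[kK e]].
  by move: h; rewrite /stabS /= => /setIP [kK /astab1P /=]; rewrite setactRs.
by rewrite /stabS /=; apply/setIP; split=> //; apply/astab1P => /=; rewrite setactRs.
Qed.

Lemma stabS_sub K S : stabS K S \subset K.
Proof. by apply/subsetP => k /stabSP []. Qed.

Lemma orbitS_mem K (S0 : {set {set gT}}) S :
  S \in orbit ('Rs)^* K S0 -> exists2 k, k \in K & S = [set E :* k | E in S0].
Proof.
by case/imsetP => k kK ->; exists k => //=; rewrite setactRs.
Qed.

Lemma orbitS_fixed K (S : {set {set gT}}) :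
  (forall k, k \in K -> [set E :* k | E in S] = S) -> orbit ('Rs)^* K S = [set S].
Proof.
move=> h; apply/setP => S'; rewrite inE; apply/idP/eqP => [/orbitS_mem [k kK ->]|->].
  exact: h.
exact: orbit_refl.
Qed.

Lemma sections_act L H K S k : S \in sections L H K -> k \in K ->
  [set E :* k | E in S] \in sections L H K.
Proof.
rewrite !inE ?powersetE => /andP [sS /forall_inP hS] kK.
apply/andP; split.
  apply/subsetP => E' /imsetP [E ES ->]; apply: rcosets_act => //.
  exact: (subsetP sS).
apply/forall_inP => C hC.
have eq : [set E in [set E :* k | E in S] | E \subset C] =
          [set E :* k | E in [set E in S | E \subset C :* k^-1]].
  apply/setP => E'; rewrite inE; apply/andP/imsetP => [[/imsetP [E ES ->] sub]|[E]].
    by exists E => //; rewrite inE ES sub_rcosetV.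
  rewrite inE => /andP [ES sub] ->; split; first exact: imset_f.
  by rewrite -sub_rcosetV.
rewrite eq card_imset; first by apply: hS; apply: rcosets_act; rewrite ?groupV.
by move=> A B /= e; rewrite -(rcosetK k A) e rcosetK.
Qed.

Lemma sect_sub L H K OS O : L \subset H -> H \subset K ->
  OS \in orbitsS K (sections L H K) ->
  O \in orbitsC (stabS K (pick_in OS set0)) H K ->
  (stabS K (pick_in OS set0) :&: H :^ pick_in (pick_in O (H : {set gT})) 1)
    \subset L :^ pick_in (pick_in [set E in pick_in OS set0 |
                                     E \subset pick_in O (H : {set gT})] (L : {set gT})) 1.
Proof.
move=> sLH sHK hOS hO.
set S := pick_in OS set0.
have SS : S \in sections L H K.
  move: hOS => /imsetP [S0 S0s eOS].
  have : S \in OS by apply: pick_inP; apply/set0Pn; exists S0; rewrite eOS orbit_refl.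
  by rewrite eOS => /orbitS_mem [k kK ->]; apply: sections_act.
have [hC xK eC] := orbitsC_pick (stabS_sub K S) sHK hO.
set C := pick_in O _ in hC xK eC *.
set x := pick_in C 1 in xK eC *.
move: SS; rewrite inE ?powersetE => /andP [sS /forall_inP /(_ C hC) /cards1P [E0 eE0]].
rewrite eE0 pick_in1.
have : E0 \in [set E in S | E \subset C] by rewrite eE0 set11.
rewrite inE => /andP [E0S E0C].
have : E0 \in rcosets L K by apply: (subsetP sS).
case/rcosetsP => z zK eE0z.
set y := pick_in E0 1.
have yE0 : y \in E0 by apply: pick_inP; apply/set0Pn; exists z; rewrite eE0z rcoset_refl.
have eE0y : E0 = L :* y by rewrite eE0z; apply/esym/rcoset_eqP; rewrite -eE0z.
apply/subsetP => k /setIP [/stabSP [kK eS] kHx].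
have eCk : C :* k = C.
  rewrite eC -rcosetM conjgCV rcosetM [H :* (k ^ _)]rcoset_id //.
  by rewrite mem_conjg in kHx.
have E0k : E0 :* k \in [set E in S | E \subset C].
  rewrite inE; apply/andP; split; last by rewrite -eCk rcosetS.
  by rewrite -eS; apply/imsetP; exists E0.
move: E0k; rewrite eE0 => /set1P; rewrite eE0y -rcosetM => e.
have : y * k \in L :* y by rewrite -e rcoset_refl.
rewrite mem_rcoset mem_conjg conjgE invgK.
by rewrite mulgA.
Qed.

Lemma fixed_class H K OS : H \subset K ->
  OS \in orbitsS K (powerset (rcosets H K)) ->
  K \subset stabS K (pick_in OS set0) ->
  OS = [set set0] \/ OS = [set rcosets H K].
Proof.
move=> sHK /imsetP [S0 S0s eOS] sK.
set S := pick_in OS set0 in sK.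
have SOS : S \in OS by apply: pick_inP; apply/set0Pn; exists S0; rewrite eOS orbit_refl.
have fixS : forall k, k \in K -> [set E :* k | E in S] = S.
  by move=> k kK; case/stabSP: (subsetP sK k kK).
have [k0 k0K eS] : exists2 k, k \in K & S = [set E :* k | E in S0].
  by apply: orbitS_mem; rewrite -eOS.
have eOS' : OS = [set S].
  rewrite eOS; apply/setP => S'; rewrite inE; apply/idP/eqP => [/orbitS_mem [k kK ->]|->].
    rewrite -(fixS (k0^-1 * k)); last by rewrite groupM ?groupV.
    rewrite eS; apply/setP => E; apply/imsetP/imsetP => [[E' E'S0 ->]|[E' /imsetP [E'' E''S0 ->] ->]].
      by exists (E' :* k0); [apply: imset_f | rewrite -rcosetM mulKVg].
    by exists E'' => //; rewrite -rcosetM mulKVg.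
  by apply/imsetP; exists k0 => //=; rewrite eS setactRs.
have sSX : S \subset rcosets H K.
  rewrite eS; apply/subsetP => E /imsetP [E' hE' ->]; apply: rcosets_act => //.
  by move: S0s; rewrite ?powersetE => /subsetP; apply.
case: (set_0Vmem S) => [e0|[E ES]]; [left|right]; rewrite eOS' ?e0 //.
congr [set _]; apply/eqP; rewrite eqEsubset sSX /=.
apply/subsetP => E' /rcosetsP [z zK ->].
move: (subsetP sSX E ES) => /rcosetsP [w wK eE].
rewrite -(fixS (w^-1 * z)); last by rewrite groupM ?groupV.
by apply/imsetP; exists E => //; rewrite eE -rcosetM mulKVg.
Qed.

Lemma stabS_set0 K : stabS K set0 = K.
Proof.
apply: gval_eq; apply/eqP; rewrite eqEsubset stabS_sub /=.
by apply/subsetP => k kK; apply/stabSP; split=> //; rewrite imset0.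
Qed.

Lemma stabS_all H K : stabS K (rcosets H K) = K.
Proof.
apply: gval_eq; apply/eqP; rewrite eqEsubset stabS_sub /=.
by apply/subsetP => k kK; apply/stabSP; split=> //; rewrite rcosets_fix.
Qed.

Lemma orbitsS_set0 H K : [set set0] \in orbitsS K (powerset (rcosets H K)).
Proof.
apply/imsetP; exists set0; first by rewrite ?powersetE sub0set.
by rewrite orbitS_fixed // => k _; rewrite imset0.
Qed.

Lemma orbitsS_all H K : [set rcosets H K] \in orbitsS K (powerset (rcosets H K)).
Proof.
apply/imsetP; exists (rcosets H K); first by rewrite ?powersetE subxx.
by rewrite orbitS_fixed // => k; apply: rcosets_fix.
Qed.

Lemma set0_neq_all H K : [set set0] != [set rcosets H K] :> {set {set {set gT}}}.
Proof.
apply/negP => /eqP /setP /(_ set0); rewrite !inE eqxx => /esym /eqP e.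
by have := rcoset_in H (group1 K); rewrite -e inE.
Qed.

End Comb.

End Part3.
Import Part3.

Module Part4.
Set Implicit Arguments. Unset Strict Implicit. Unset Printing Implicit Defensive.
Import GRing.Theory.
Local Open Scope ring_scope.

Section Nm0.
Variable gT : finGroupType.
Variable T : tambara gT.
Implicit Types (H K L KS : {group gT}) (g : gT).
Local Notation res := (tres T).
Local Notation tr := (ttr T).
Local Notation nm := (tnm T).
Local Notation cj := (tcj T).

Lemma idem_pow (R : comPzRingType) (n : R) c : n * n = n -> (0 < c)%N -> n ^+ c = n.
Proof.
move=> hn; elim: c => [//|[|c] IH _]; first by rewrite expr1.
by rewrite exprS IH.
Qed.

Lemma conj_in_sub H K x : (H \subset K)%g -> x \in K -> (H :^ x \subset K)%g.
Proof. by move=> sHK xK; rewrite -(conjGid xK) conjSg. Qed.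

Lemma setI_conj H K x : (H \subset K)%g -> x \in K -> (K :&: H :^ x)%g = (H :^ x)%g.
Proof. by move=> sHK xK; apply/setIidPr; apply: conj_in_sub. Qed.

Lemma cj0 g H K : (K :=: H :^ g)%g -> cj g H K 0 = 0.
Proof. by move=> h; apply: rh0 (cj_hom T h). Qed.
Lemma res0 H K : (H \subset K)%g -> res H K 0 = 0.
Proof. by move=> h; apply: rh0 (res_hom T h). Qed.

Lemma nm_conj_in H K H' x a : (H \subset K)%g -> x \in K -> (H' :=: H :^ x)%g ->
  nm H' K (cj x H H' a) = nm H K a.
Proof.
move=> sHK xK eH'.
rewrite -(compat_nm a sHK eH' (esym (conjGid xK))).
by rewrite cj_in.
Qed.

Lemma nm0 H K : (H \subset K)%g -> nm H K 0 = 0.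
Proof.
move: {2}#|K| (leqnn #|K|) => N; elim: N H K => [|N IH] H K.
  by rewrite leqn0 cards_eq0 => /eqP e; have := group1 K; rewrite e inE.
move=> hK sHK.
set n := nm H K 0.
have nn : n * n = n by rewrite -nmM // mulr0.
have hfac1 : forall O : {set {set gT}}, O \in orbitsC K H K -> nfactor K O (0 : tT T H) = n.
  move=> O hO; rewrite /nfactor /=.
  have sKK : (K \subset K)%g by []. have [_ xK _] := orbitsC_pick sKK sHK hO.
  set x := pick_in _ 1%g in xK *.
  rewrite cj0 // res0 ?subsetIr //.
  rewrite -(cj0 (H:=H) (K := (K :&: H :^ x)%G) (g := x)) /=; last by rewrite setI_conj.
  by rewrite nm_conj_in //= setI_conj.
have hfac0 : forall KS (O : {set {set gT}}), (KS \subset K)%g -> ~~ (K \subset KS)%g -> O \in orbitsC KS H K ->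
    nfactor KS O (0 : tT T H) = 0.
  move=> KS O sKS sK hO; rewrite /nfactor /=.
  rewrite cj0 // res0 ?subsetIr //.
  apply: IH; last exact: subsetIl.
  rewrite -ltnS; apply: leq_trans hK; apply: proper_card.
  by rewrite properEneq sKS andbT; apply: contraNneq sK => ->.
have hterm : forall OS, OS \in orbitsS K (powerset (rcosets H K)) ->
    (let S := pick_in OS set0 in
     tr (stabS K S) K
       (\prod_(O in orbitsC (stabS K S) H K)
          nfactor (stabS K S) O (if pick_in O (H : {set gT}) \in S then (0 : tT T H) else 0)))
    = if (K \subset stabS K (pick_in OS set0))%g then n else 0.
  move=> OS _ /=; set S := pick_in OS set0.
  have sKS := stabS_sub K S.
  have c0 : forall KS, (0 < #|orbitsC KS H K|)%N by move=> KS; rewrite card_gt0 orbitsC_neq0.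
  case: ifP => sK.
    have eKS : stabS K S = K by apply: gval_eq; apply/eqP; rewrite eqEsubset sKS sK.
    rewrite eKS tr_id (eq_bigr (fun _ => n)); last by move=> O hO; rewrite if_same hfac1.
    by rewrite prodr_const idem_pow.
  rewrite (eq_bigr (fun _ => 0)); last by move=> O hO; rewrite if_same hfac0 ?sK.
  by rewrite prodr_const expr0n eqn0Ngt c0 /= tr0 //; apply: stabS_sub.
have := @norm_sum _ T H K 0 0 sHK; rewrite addr0 -/n.
rewrite (eq_bigr _ hterm).
rewrite (bigD1 [set set0]) ?orbitsS_set0 //.
rewrite (bigD1 [set rcosets H K]); last by rewrite orbitsS_all eq_sym set0_neq_all.
rewrite pick_in1 stabS_set0 pick_in1 stabS_all subxx_hint.
rewrite big1.
  move=> e; have e' : n = n + (n + 0) by exact: e.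
  by rewrite addr0 in e'; apply: (addrI n); rewrite addr0 -e'.
move=> OS /andP [/andP [hOS n1] n2]; case: ifP => // sK.
by case: (fixed_class sHK hOS sK) => e; [move: n1 | move: n2]; rewrite e eqxx.
Qed.

End Nm0.

End Part4.
Import Part4.

Module Part5.
Set Implicit Arguments. Unset Strict Implicit. Unset Printing Implicit Defensive.
Import GRing.Theory.
Local Open Scope ring_scope.

Arguments stabS : simpl never.
Arguments pick_in : simpl never.
Arguments nfactor : simpl never.
Arguments orbitsC : simpl never.
Arguments orbitsS : simpl never.
Arguments sections : simpl never.
Arguments dcosets : simpl never.

Lemma In_map (A B : Type) (f : A -> B) (s : seq A) y :
  List.In y (map f s) -> exists x, List.In x s /\ y = f x.
Proof.
elim: s => [//|a s IH] /= [<-|/IH [x [xs ->]]]; first by exists a; split=> //; left.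
by exists x; split=> //; right.
Qed.

Section DL.
Variable gT : finGroupType.
Variable T : tambara gT.
Implicit Types (H K L KS : {group gT}) (g : gT).
Local Notation res := (tres T).
Local Notation tr := (ttr T).
Local Notation nm := (tnm T).
Local Notation cj := (tcj T).

Definition term := {H : {group gT} & (tT T H * tT T H)%type}.
Definition mkterm H (r m : tT T H) : term := existT _ H (r, m).

Variable M : tfam T.
Hypothesis hMres : forall H K (x : tT T K), (H \subset K)%g -> M x -> M (res H K x).
Hypothesis hMcj : forall g H K (x : tT T H), (K :=: H :^ g)%g -> M x -> M (cj g H K x).
Hypothesis hMnm : forall H K (x : tT T H), (H \subset K)%g -> M x -> M (nm H K x).

Definition validD K (s : seq term) :=
  forall p, List.In p s -> (tag p \subset K)%g /\ M (tagged p).2.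
Definition sumD K (s : seq term) : tT T K :=
  \sum_(p <- s) tr (tag p) K ((tagged p).1 * (tagged p).2).
Definition Dfam : tfam T := fun K (z : tT T K) => exists s, validD K s /\ z = sumD K s.

Lemma D0 K : Dfam (0 : tT T K).
Proof. by exists [::]; split=> //; rewrite /sumD big_nil. Qed.

Lemma DD K (a b : tT T K) : Dfam a -> Dfam b -> Dfam (a + b).
Proof.
move=> [s1 [v1 ->]] [s2 [v2 ->]]; exists (s1 ++ s2); split; last by rewrite /sumD big_cat.
by move=> p hp; case: (List.in_app_or _ _ _ hp) => h; [exact: v1 | exact: v2].
Qed.

Lemma Dbig K (I : Type) (r : seq I) (P : pred I) (F : I -> tT T K) :
  (forall i, P i -> Dfam (F i)) -> Dfam (\sum_(i <- r | P i) F i).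
Proof. by move=> h; apply: big_ind => //; [apply: D0 | apply: DD]. Qed.

Lemma Dterm H K r m : (H \subset K)%g -> M m -> Dfam (tr H K (r * m)).
Proof.
move=> sHK hm; exists [:: mkterm r m]; split; last by rewrite /sumD big_seq1.
by move=> p [<-|//].
Qed.

Lemma DM K (m : tT T K) : M m -> Dfam m.
Proof. by move=> hm; have := @Dterm K K 1 m (subxx_hint _) hm; rewrite tr_id mul1r. Qed.

Lemma DbigIn K (I : Type) (s : seq I) (F : I -> tT T K) :
  (forall i, List.In i s -> Dfam (F i)) -> Dfam (\sum_(i <- s) F i).
Proof.
elim: s => [|a s IH] h; first by rewrite big_nil; apply: D0.
by rewrite big_cons; apply: DD; [apply: h; left | apply: IH => i hi; apply: h; right].
Qed.

Lemma Dsum_valid K (s : seq term) (F : term -> tT T K) :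
  validD K s -> (forall p : term, (tag p \subset K)%g -> M (tagged p).2 -> Dfam (F p)) ->
  Dfam (\sum_(p <- s) F p).
Proof. by move=> v h; apply: DbigIn => p /v [sp mp]; apply: h. Qed.

Lemma Dr K r (z : tT T K) : Dfam z -> Dfam (r * z).
Proof.
move=> [s [v ->]]; rewrite /sumD mulr_sumr; apply: Dsum_valid => // p sp mp.
by rewrite mulrC frob // mulrAC; apply: Dterm.
Qed.

Lemma Drr K r (z : tT T K) : Dfam z -> Dfam (z * r).
Proof. by rewrite mulrC; apply: Dr. Qed.

Lemma Dtr K K' (z : tT T K) : (K \subset K')%g -> Dfam z -> Dfam (tr K K' z).
Proof.
move=> sK [s [v ->]]; rewrite /sumD tr_sum //; apply: DbigIn => p /v [sp mp].
by rewrite tr_trans //; apply: Dterm => //; apply: subset_trans sp sK.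
Qed.

Lemma Dcj_size g K K' s : (K' :=: K :^ g)%g -> validD K s ->
  exists s', [/\ size s' = size s, validD K' s' & cj g K K' (sumD K s) = sumD K' s'].
Proof.
move=> eK; elim: s => [|p s IH] v.
  by exists [::]; split=> //; rewrite /sumD !big_nil (rh0 (cj_hom T eK)).
have [sp mp] := v p (or_introl erefl).
have [s' [e1 v' e2]] := IH (fun q hq => v q (or_intror hq)).
exists (@mkterm (tag p :^ g)%G (cj g (tag p) (tag p :^ g)%G (tagged p).1)
          (cj g (tag p) (tag p :^ g)%G (tagged p).2) :: s'); split.
- by rewrite /= e1.
- move=> q [<-|hq]; last exact: v' q hq.
  split=> /=; first by rewrite eK conjSg.
  by apply: hMcj.
- rewrite /sumD !big_cons -/(sumD K s) -/(sumD K' s') (rhD (cj_hom T eK)) e2 /=.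
  by rewrite (compat_tr _ sp (erefl _) eK) (rhM (cj_hom T (erefl _))).
Qed.

Lemma Dcj g K K' (z : tT T K) : (K' :=: K :^ g)%g -> Dfam z -> Dfam (cj g K K' z).
Proof.
move=> eK [s [v ->]]; have [s' [_ v' ->]] := Dcj_size eK v.
by exists s'.
Qed.

Lemma Dres H K (z : tT T K) : (H \subset K)%g -> Dfam z -> Dfam (res H K z).
Proof.
move=> sHK [s [v ->]]; rewrite /sumD (rh_sum (res_hom T sHK)); apply: DbigIn => p /v [sp mp].
rewrite mackey_tr //; apply: Dbig => C _.
rewrite (rhM (cj_hom T (erefl _))) (rhM (res_hom T (subsetIr _ _))).
apply: Dterm; first exact: subsetIl.
apply: hMres; first exact: subsetIr.
by apply: hMcj.
Qed.

Lemma Dnm_gen N : forall K', (#|K'| <= N)%N -> forall n K s, (size s <= n)%N ->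
  (K \subset K')%g -> validD K s -> Dfam (nm K K' (sumD K s)).
Proof.
elim: N => [|N IHN] K'.
  by rewrite leqn0 cards_eq0 => /eqP e; have := group1 K'; rewrite e inE.
move=> hK'; elim=> [|n IHn] K s hs sKK' v.
  by move: hs; rewrite leqn0 => /nilP ->; rewrite /sumD big_nil nm0 //; apply: D0.
have hfac : forall KS (O : {set {set gT}}) (w : tT T K), (KS \subset K')%g ->
    O \in orbitsC KS K K' ->
    (exists s0, [/\ (size s0 <= n)%N, validD K s0 & w = sumD K s0]) ->
    Dfam (nfactor KS O w).
  move=> KS O w sKS hO [s0 [hs0 v0 ->]].
  have [_ xK _] := orbitsC_pick sKS sKK' hO.
  rewrite /nfactor; set x := pick_in _ 1%g in xK *.
  have [s1 [e1 v1 e2]] := Dcj_size (g:=x) (K':=(K :^ x)%G) (erefl _) v0.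
  rewrite e2.
  have [ltKS | geKS] := ltnP #|KS| #|K'|.
    have [s2 [v2 ->]] := Dres (subsetIr KS (K :^ x)%g) (ex_intro _ s1 (conj v1 erefl)).
    apply: (IHN KS _ (size s2)) => //; last exact: subsetIl.
    by rewrite -ltnS; apply: leq_trans hK'.
  have eKS : KS = K' by apply: gval_eq; apply/eqP; rewrite eqEcard sKS geKS.
  subst KS.
  have eG : (K' :&: K :^ x)%G = (K :^ x)%G by apply: gval_eq; rewrite /= setI_conj.
  rewrite eG res_id; apply: IHn => //; first by rewrite e1.
  exact: conj_in_sub.
case: s hs v => [|p s] hs v.
  by rewrite /sumD big_nil nm0 //; apply: D0.
have [sp mp] := v p (or_introl erefl).
case: s hs v => [|q s] hs v.
  rewrite /sumD big_seq1 norm_tr //.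
  apply: Dbig => OS hOS; cbv zeta.
  apply: Dtr; first exact: stabS_sub.
  rewrite (bigD1 (orbit 'Rs (stabS K' (pick_in OS set0)) (K : {set gT}))) ?orbitsC_H //.
  apply: Drr.
  have ssub := sect_sub sp sKK' hOS (orbitsC_H _ _ _).
  rewrite (rhM (cj_hom T (erefl _))) (rhM (res_hom T ssub)) nmM ?subsetIl //.
  apply: Dr; apply: DM; apply: hMnm; first exact: subsetIl.
  by apply: hMres ssub _; apply: hMcj.
have e : sumD K [:: p, q & s] = sumD K [:: p] + sumD K (q :: s).
  by rewrite /sumD !big_cons big_nil addr0.
rewrite e norm_sum //.
apply: Dbig => OS _; cbv zeta.
apply: Dtr; first exact: stabS_sub.
rewrite (bigD1 (orbit 'Rs (stabS K' (pick_in OS set0)) (K : {set gT}))) ?orbitsC_H //.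
apply: Drr.
apply: hfac; [exact: stabS_sub | exact: orbitsC_H | ].
case: ifP => _; [exists (q :: s) | exists [:: p]]; split => //.
- by move=> r hr; apply: v; right.
- by move: hs => /=; rewrite !ltnS; apply: leq_trans.
- by move=> r [<-|//]; apply: v; left.
Qed.

Lemma Dnm K K' (z : tT T K) : (K \subset K')%g -> Dfam z -> Dfam (nm K K' z).
Proof. by move=> sK [s [v ->]]; apply: (Dnm_gen (leqnn _) (leqnn _)). Qed.

Lemma D_ideal : is_tideal Dfam.
Proof.
split.
- by move=> H; apply: D0.
- by move=> H x y; apply: DD.
- by move=> H r x; apply: Dr.
- by move=> H K x sHK; apply: Dres.
split.
- by move=> H K x sHK; apply: Dtr.
- by move=> H K x sHK; apply: Dnm.
- by move=> g H K x eK; apply: Dcj.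
Qed.

Lemma D_gen : feq (tgen M) Dfam.
Proof.
move=> H x; split.
  by apply: tgen_min; [apply: D_ideal | move=> K y; apply: DM].
have hI := tgen_ideal M.
move=> [s [v ->]]; rewrite /sumD; elim: s v => [|p s IH] v.
  by rewrite big_nil; apply: (id0 hI).
rewrite big_cons; apply: (idD hI); last by apply: IH => q hq; apply: v; right.
have [sp mp] := v p (or_introl erefl).
by apply: (idtr hI sp); apply: (idMl hI); apply: tgen_sub.
Qed.

End DL.

End Part5.
Import Part5.

Module Part6.
Set Implicit Arguments. Unset Strict Implicit. Unset Printing Implicit Defensive.
Import GRing.Theory.
Local Open Scope ring_scope.

Section Prod.
Variable gT : finGroupType.
Variable T : tambara gT.
Implicit Types (H K L : {group gT}) (g : gT).
Variables (M1 M2 M3 : tfam T).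
Hypothesis h1res : forall H K (x : tT T K), (H \subset K)%g -> M1 x -> M1 (tres T H K x).
Hypothesis h2res : forall H K (x : tT T K), (H \subset K)%g -> M2 x -> M2 (tres T H K x).
Hypothesis h2cj : forall g H K (x : tT T H), (K :=: H :^ g)%g -> M2 x -> M2 (tcj T g H K x).
Hypothesis h12 : forall H (a b : tT T H), M1 a -> M2 b -> M3 (a * b).

Lemma D_mulM H (a y : tT T H) : M1 a -> Dfam M2 y -> Dfam M3 (a * y).
Proof.
move=> ha [s [v ->]]; rewrite /sumD mulr_sumr; apply: DbigIn => p /v [sp mp].
rewrite mulrC frob // -mulrA; apply: Dterm => //.
by rewrite mulrC; apply: h12 => //; apply: h1res.
Qed.

Lemma D_mul K (z w : tT T K) : Dfam M1 z -> Dfam M2 w -> Dfam M3 (z * w).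
Proof.
move=> [s [v ->]] hw; rewrite /sumD mulr_suml; apply: DbigIn => p /v [sp mp].
rewrite frob // -mulrA; apply: Dtr => //; apply: Dr; apply: D_mulM => //.
exact: (Dres h2res h2cj sp hw).
Qed.
End Prod.

Lemma size_count_sum (A : finType) (s : seq A) :
  size s = (\sum_(a : A) count_mem a s)%N.
Proof.
elim: s => [|x s IH]; first by rewrite big1.
rewrite /= IH big_split /= -add1n; congr (_ + _)%N.
rewrite (bigD1 x) //= eqxx big1 // => a /negbTE.
by rewrite eq_sym => ->.
Qed.

Lemma pigeon (A : finType) (s : seq A) c :
  (#|A| * c < size s)%N -> exists a, (c < count_mem a s)%N.
Proof.
move=> h; have : ~~ [forall a, (count_mem a s <= c)%N].
  apply/negP => /forallP hn; move: h; rewrite size_count_sum -sum_nat_const ltnNge => /negP; apply.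
  by apply: leq_sum => a _; apply: hn.
by case/forallPn => a; rewrite -ltnNge => ha; exists a.
Qed.

End Part6.
Import Part6.

Module Part7.
Set Implicit Arguments. Unset Strict Implicit. Unset Printing Implicit Defensive.
Import GRing.Theory.
Local Open Scope ring_scope.

Arguments dcosets : simpl never.
Arguments pick_in : simpl never.

Section Atoms.
Variable gT : finGroupType.
Variable T : tambara gT.
Implicit Types (H K L B : {group gT}) (g : gT).
Local Notation res := (tres T).
Local Notation tr := (ttr T).
Local Notation nm := (tnm T).
Local Notation cj := (tcj T).
Variable L0 : {group gT}.
Variable I : finType.
Variable sd : I -> tT T L0.

Definition atype := (I * {group gT} * gT)%type.
Definition atom (t : atype) K : tT T K :=
  nm t.1.2 K (res t.1.2 (L0 :^ t.2)%G (cj t.2 L0 (L0 :^ t.2)%G (sd t.1.1))).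
Definition avalid K (t : atype) : bool :=
  (t.1.2 \subset K)%g && (t.1.2 \subset L0 :^ t.2)%g.
Definition Qj (j : nat) : tfam T := fun K z =>
  exists s : seq atype, [/\ (j <= size s)%N, all (avalid K) s & z = \prod_(t <- s) atom t K].

Lemma QjM i j K (a b : tT T K) : Qj i a -> Qj j b -> Qj (i + j) (a * b).
Proof.
move=> [s1 [h1 v1 ->]] [s2 [h2 v2 ->]]; exists (s1 ++ s2); split.
- by rewrite size_cat leq_add.
- by rewrite all_cat v1 v2.
- by rewrite big_cat.
Qed.

Lemma Qj_le i j K (a : tT T K) : (j <= i)%N -> Qj i a -> Qj j a.
Proof. by move=> hji [s [hs v ->]]; exists s; split=> //; apply: leq_trans hs. Qed.

Lemma Qj01 K : Qj 0 (1 : tT T K).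
Proof. by exists [::]; split=> //; rewrite big_nil. Qed.

Lemma Qj1_atom K t : avalid K t -> Qj 1 (atom t K).
Proof. by move=> v; exists [:: t]; split=> //=; [rewrite v | rewrite big_seq1]. Qed.

Lemma Qj_map K K' (h : tT T K -> tT T K') :
  (forall a b, h (a * b) = h a * h b) -> h 1 = 1 ->
  (forall t, avalid K t -> Qj 1 (h (atom t K))) ->
  forall j (z : tT T K), Qj j z -> Qj j (h z).
Proof.
move=> hM h1 hat j z [s [hs v ->]]; apply: Qj_le hs _.
rewrite (mul_prod_of s predT (fun t => atom t K) hM h1).
elim: s v => [|t s IH] /=; first by rewrite big_nil => _; apply: Qj01.
by case/andP => vt vs; rewrite big_cons -add1n; apply: QjM; [apply: hat | apply: IH].
Qed.

Lemma Qj_bigset (X : finType) K (A : {set X}) (tf : X -> atype) :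
  (forall C, C \in A -> avalid K (tf C)) ->
  Qj #|A| (\prod_(C in A) atom (tf C) K).
Proof.
move=> hA; exists (map tf (enum A)); split.
- by rewrite size_map cardE.
- by apply/allP => t /mapP [C]; rewrite mem_enum => CA ->; apply: hA.
- by rewrite big_map big_enum.
Qed.

Lemma cj_res_cj g x B (a : tT T L0) : (B \subset L0 :^ g)%g ->
  cj x B (B :^ x)%G (res B (L0 :^ g)%G (cj g L0 (L0 :^ g)%G a)) =
  res (B :^ x)%G (L0 :^ (g * x))%G (cj (g * x) L0 (L0 :^ (g * x))%G a).
Proof.
move=> hB.
rewrite (compat_res (K' := (L0 :^ (g * x))%G) _ hB (erefl _)) /=; last by rewrite conjsgM.
by rewrite cj_comp //= conjsgM.
Qed.

Lemma sub_conj_mul B g x : (B \subset L0 :^ g)%g -> (B :^ x \subset L0 :^ (g * x))%g.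
Proof. by move=> hB; rewrite conjsgM conjSg. Qed.

Lemma atom_res H K t : (H \subset K)%g -> avalid K t -> Qj 1 (res H K (atom t K)).
Proof.
case: t => [[i B] g] sHK /andP [/= sBK sBL].
rewrite /atom /= mackey_nm //.
rewrite (eq_bigr (fun C => atom (i, (H :&: B :^ pick_in C 1%g)%G, (g * pick_in C 1%g)%g) H)); last first.
  move=> C _; rewrite /atom /= cj_res_cj // res_trans //; first exact: subsetIr.
  exact: sub_conj_mul.
apply: (Qj_le (i := #|dcosets B H K|)).
  rewrite card_gt0; apply/set0Pn; exists [set (h * 1%g * l)%g | h in B, l in H].
  by apply/imsetP; exists 1%g.
apply: Qj_bigset => C _; rewrite /avalid /= subsetIl /=.
by apply: subset_trans (subsetIr _ _) (sub_conj_mul _ sBL).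
Qed.

Lemma atom_cj g' K K' t : (K' :=: K :^ g')%g -> avalid K t -> Qj 1 (cj g' K K' (atom t K)).
Proof.
case: t => [[i B] g] eK /andP [/= sBK sBL].
rewrite /atom /= (compat_nm (H' := (B :^ g')%G) _ sBK (erefl _) eK) cj_res_cj //.
apply: (Qj1_atom (t := (i, (B :^ g')%G, (g * g')%g))).
by rewrite /avalid /= eK conjSg sBK sub_conj_mul.
Qed.

Lemma atom_nm K K2 t : (K \subset K2)%g -> avalid K t -> Qj 1 (nm K K2 (atom t K)).
Proof.
case: t => [[i B] g] sK /andP [/= sBK sBL].
rewrite /atom /= nm_trans //.
apply: (Qj1_atom (t := (i, B, g))).
by rewrite /avalid /= sBL (subset_trans sBK sK).
Qed.

Lemma Qj_res j H K (z : tT T K) : (H \subset K)%g -> Qj j z -> Qj j (res H K z).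
Proof.
move=> sHK; apply: Qj_map; [exact: rhM (res_hom T sHK) | exact: rh1 (res_hom T sHK) |].
by move=> t; apply: atom_res.
Qed.

Lemma Qj_cj j g H K (z : tT T H) : (K :=: H :^ g)%g -> Qj j z -> Qj j (cj g H K z).
Proof.
move=> eK; apply: Qj_map; [exact: rhM (cj_hom T eK) | exact: rh1 (cj_hom T eK) |].
by move=> t; apply: atom_cj.
Qed.

Lemma Qj_nm j H K (z : tT T H) : (H \subset K)%g -> Qj j z -> Qj j (nm H K z).
Proof.
move=> sHK; apply: Qj_map; [exact: nmM sHK | exact: nm1 sHK |].
by move=> t; apply: atom_nm.
Qed.

Lemma seed_Qj i : Qj 1 (sd i).
Proof.
have eL : (L0 :^ 1%g)%G = L0 by apply: gval_eq; rewrite /= conjsg1.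
have -> : sd i = atom (i, L0, 1%g) L0.
  by rewrite /atom eL res_id nm_id cj_in //= group1.
by apply: Qj1_atom; rewrite /avalid /= conjsg1 andbb; apply: subxx_hint.
Qed.

Lemma atom_in (J : tfam T) K t : is_tideal J -> J L0 (sd t.1.1) -> avalid K t -> J K (atom t K).
Proof.
move=> hJ hs /andP [sBK sBL].
apply: (idnm hJ sBK); apply: (idres hJ sBL); exact: (idcj hJ (erefl _) hs).
Qed.

Lemma atomX K t k : avalid K t ->
  atom t K ^+ k = nm t.1.2 K (res t.1.2 (L0 :^ t.2)%G (cj t.2 L0 (L0 :^ t.2)%G (sd t.1.1 ^+ k))).
Proof.
case/andP => sBK sBL.
by rewrite /atom (rhX (cj_hom T (erefl _))) (rhX (res_hom T sBL)) nmX.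
Qed.

Lemma Qj_tpow (J : tfam T) n K (z : tT T K) : is_tideal J -> (forall i, J L0 (sd i)) ->
  Qj n.+1 z -> tpow J n z.
Proof.
move=> hJ hs [s [hsz v ->]].
rewrite -(big_map (fun t => atom t K) predT id).
apply: (prod_tpow hJ); last by rewrite size_map.
move=> a /mapP [t ts ->]; apply: atom_in => //.
exact: (allP v).
Qed.

Lemma Qj_ideal j : [/\ forall H K (x : tT T K), (H \subset K)%g -> Qj j x -> Qj j (res H K x),
  forall g H K (x : tT T H), (K :=: H :^ g)%g -> Qj j x -> Qj j (cj g H K x) &
  forall H K (x : tT T H), (H \subset K)%g -> Qj j x -> Qj j (nm H K x)].
Proof. by split=> *; [apply: Qj_res | apply: Qj_cj | apply: Qj_nm]. Qed.

Lemma tpow_Q (P : tfam T) : is_tideal P -> fsub P (Dfam (Qj 1)) ->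
  forall n, fsub (tpow P n) (Dfam (Qj n.+1)).
Proof.
move=> hP hP1; elim=> [//|n IH] /=.
have [r c m] := Qj_ideal n.+2.
apply: tgen_min; first exact: D_ideal r c m.
move=> H z [x [y [hx hy ->]]].
have [r1 _ _] := Qj_ideal n.+1.
have [r2 c2 _] := Qj_ideal 1.
apply: (D_mul r1 r2 c2 _ (IH _ _ hx) (hP1 _ _ hy)).
by move=> K a b ha hb; rewrite -addn1; apply: QjM.
Qed.

End Atoms.

End Part7.
Import Part7.

Module Part8.
Set Implicit Arguments. Unset Strict Implicit. Unset Printing Implicit Defensive.
Import GRing.Theory.
Local Open Scope ring_scope.

Lemma prod_nseq (R : comPzRingType) (a : R) n : \prod_(z <- nseq n a) z = a ^+ n.
Proof. by elim: n => [|n IH]; rewrite ?big_nil ?expr0 // /= big_cons IH exprS. Qed.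

Lemma prod_pred1 (R : comPzRingType) (A : eqType) (s : seq A) (F : A -> R) a :
  \prod_(t <- s | t == a) F t = F a ^+ count_mem a s.
Proof.
elim: s => [|t s IH]; first by rewrite big_nil.
rewrite big_cons IH /=; case: eqP => [->|_]; last by rewrite add0n.
by rewrite add1n exprS.
Qed.

Lemma arith1 a b ca cb n : ((a + b).+1 < n)%N -> (ca + cb)%N = n -> (ca < a.+1)%N -> (b < cb)%N.
Proof. lia. Qed.

Lemma prod_split1 (R : comPzRingType) (A : eqType) (s : seq A) (F : A -> R) a :
  \prod_(t <- s) F t = F a ^+ count_mem a s * \prod_(t <- s | t != a) F t.
Proof.
elim: s => [|t s IH]; first by rewrite !big_nil mulr1.
rewrite !big_cons IH /=; case: eqP => [->|_] /=; first by rewrite add1n exprS mulrA.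
by rewrite add0n mulrCA.
Qed.

Section Rad.
Variable gT : finGroupType.
Variable T : tambara gT.
Implicit Types (H K L : {group gT}) (g : gT).
Local Notation res := (tres T).
Local Notation tr := (ttr T).
Local Notation nm := (tnm T).
Local Notation cj := (tcj T).

Definition zfam : tfam T := fun H z => z = 0.

Lemma zfam_ideal : is_tideal zfam.
Proof.
rewrite /zfam; split.
- by [].
- by move=> H x y -> ->; rewrite addr0.
- by move=> H r x ->; rewrite mulr0.
- by move=> H K x sHK ->; rewrite (rh0 (res_hom T sHK)).
split.
- by move=> H K x sHK ->; rewrite tr0.
- by move=> H K x sHK ->; rewrite nm0.
- by move=> g H K x eK ->; rewrite (rh0 (cj_hom T eK)).
Qed.

Lemma pow_tpow (P : tfam T) H (a : tT T H) n : is_tideal P -> P H a -> tpow P n (a ^+ n.+1).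
Proof.
move=> hP ha; rewrite -prod_nseq; apply: (prod_tpow hP); last by rewrite size_nseq.
by move=> z /nseqP [-> _].
Qed.

Variable X : tfam T.
Hypothesis hX0 : forall H, X (0 : tT T H).
Hypothesis hXD : forall H (x y : tT T H), X x -> X y -> X (x + y).

Lemma X_sumD (M : tfam T) K (s : seq (term T)) :
  (forall p : term T, List.In p s -> X (tr (tag p) K ((tagged p).1 * (tagged p).2))) ->
  X (sumD K s).
Proof.
rewrite /sumD; elim: s => [|p s IH] h; first by rewrite big_nil.
by rewrite big_cons; apply: hXD; [apply: h; left | apply: IH => q hq; apply: h; right].
Qed.

Lemma trad_add H (x y : tT T H) : trad X x -> trad X y -> trad X (x + y).
Proof.
move=> [a ha] [b hb].
pose sd := fun bb : bool => if bb then x else y.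
have [r1 c1 m1] := Qj_ideal sd 1.
have hD1 := D_ideal r1 c1 m1.
exists (a + b).+1.
have h1 : fsub (tgen1 (x + y)) (Dfam (Qj sd 1)).
  apply: tgen1_min => //; apply: DD; [apply: DM; exact: (seed_Qj sd true) |
                                      apply: DM; exact: (seed_Qj sd false)].
apply: fsub_trans (tpow_mono _ h1) _.
move=> K z hz; have := tpow_Q hD1 (fsub_refl _) hz; move=> {hz} [s [v ->]]; apply: (X_sumD (Qj sd 1)) => p /v [sp [s1 [hs1 v1 ->]]].
set q := \prod_(t <- s1) atom sd t (tag p).
have ha' : forall t, t \in s1 -> t.1.1 -> tgen1 x (atom sd t (tag p)).
  move=> t ts tt; apply: atom_in; [exact: tgen_ideal | | exact: (allP v1)].
  by rewrite /sd tt; apply: tgen1_self.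
have hb' : forall t, t \in s1 -> ~~ t.1.1 -> tgen1 y (atom sd t (tag p)).
  move=> t ts tt; apply: atom_in; [exact: tgen_ideal | | exact: (allP v1)].
  by rewrite /sd (negbTE tt); apply: tgen1_self.
have eq : q = \prod_(t <- [seq t <- s1 | t.1.1]) atom sd t (tag p) *
              \prod_(t <- [seq t <- s1 | ~~ t.1.1]) atom sd t (tag p).
  by rewrite !big_filter /q (bigID (fun t : atype gT bool => t.1.1)).
have hcnt := count_predC (fun t : atype gT bool => t.1.1) s1.
case: (leqP a.+1 (count (fun t : atype gT bool => t.1.1) s1)) => hca.
  have hI := tpow_ideal (I := tgen1 x) a (tgen_ideal _).
  apply: ha; apply: (idtr hI sp); apply: (idMl hI); rewrite eq; apply: (idMr hI).
  rewrite -(big_map (fun t => atom sd t (tag p)) predT id).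
  apply: (prod_tpow (tgen_ideal _)); last by rewrite size_map size_filter.
  by move=> w /mapP [t]; rewrite mem_filter => /andP [tt ts] ->; apply: ha'.
have hcb : (b < count (predC (fun t : atype gT bool => t.1.1)) s1)%N.
  exact: arith1 hs1 hcnt hca.
have hI := tpow_ideal (I := tgen1 y) b (tgen_ideal _).
apply: hb; apply: (idtr hI sp); apply: (idMl hI); rewrite eq; apply: (idMl hI).
rewrite -(big_map (fun t => atom sd t (tag p)) predT id).
apply: (prod_tpow (tgen_ideal _)); last by rewrite size_map size_filter.
by move=> w /mapP [t]; rewrite mem_filter => /andP [tt ts] ->; apply: hb'.
Qed.

Lemma trad_ideal : is_tideal (trad X).
Proof.
split.
- move=> H; exists 0%N; apply: fsub_trans (tgen1_min zfam_ideal (erefl (0 : tT T H))) _.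
  by move=> K z ->; apply: hX0.
- by move=> H x y; apply: trad_add.
- move=> H r x hx; apply: trad_op hx.
  by apply: (idMl (tgen_ideal _)); apply: tgen1_self.
- move=> H K x sHK hx; apply: trad_op hx.
  by apply: (idres (tgen_ideal _) sHK); apply: tgen1_self.
split.
- move=> H K x sHK hx; apply: trad_op hx.
  by apply: (idtr (tgen_ideal _) sHK); apply: tgen1_self.
- move=> H K x sHK hx; apply: trad_op hx.
  by apply: (idnm (tgen_ideal _) sHK); apply: tgen1_self.
- move=> g H K x eK hx; apply: trad_op hx.
  by apply: (idcj (tgen_ideal _) eK); apply: tgen1_self.
Qed.

End Rad.

Section RadRad.
Variable gT : finGroupType.
Variable T : tambara gT.
Variable X : tfam T.

Lemma trad_trad : fsub (trad (trad X)) (trad X).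
Proof.
move=> H x [n0 hn].
have hxk : trad X (x ^+ n0.+1) by apply: hn; apply: (pow_tpow _ (tgen_ideal _)); apply: tgen1_self.
case: hxk => m hm.
pose sd := fun _ : unit => x.
set k := n0.+1 in hm *.
pose N := (#|{: atype gT unit}| * (k * m.+1))%N.
exists N.
have [r1 c1 m1] := Qj_ideal sd 1.
have hD1 := D_ideal r1 c1 m1.
have h1 : fsub (tgen1 x) (Dfam (Qj sd 1)).
  by apply: tgen1_min => //; apply: DM; exact: (seed_Qj sd tt).
move=> K z hz; have {}hz := tpow_Q hD1 (fsub_refl _) (tpow_mono N h1 _ _ hz).
apply: hm.
have [rN cN mN] := Qj_ideal sd N.+1.
have := (D_gen rN cN mN z).2 hz => {hz}.
apply: tgen_min; first exact: (tpow_ideal m (tgen_ideal _)).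
move=> K' q [s [hs v ->]].
have [t0 ht0] := pigeon (s := s) (c := (k * m.+1)%N) hs.
have t0s : t0 \in s by rewrite -has_pred1 has_count; apply: leq_ltn_trans ht0.
have vt0 := allP v t0 t0s.
have hI := tpow_ideal m (tgen_ideal (fun (K0 : {group gT}) (y : tT T K0) =>
             exists e : H = K0, y = ecast Z (tT T Z) e (x ^+ k))).
rewrite (prod_split1 _ _ t0); apply: (idMr hI).
rewrite -(subnKC (ltnW ht0)) exprD; apply: (idMr hI).
rewrite exprM; apply: (pow_tpow _ (tgen_ideal _)).
rewrite atomX //; case/andP: vt0 => sBK sBL.
apply: (idnm (tgen_ideal _) sBK); apply: (idres (tgen_ideal _) sBL).
by apply: (idcj (tgen_ideal _) (erefl _)); apply: tgen1_self.
Qed.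

End RadRad.

End Part8.
Import Part8.

Module Part9.
Set Implicit Arguments. Unset Strict Implicit. Unset Printing Implicit Defensive.
Import GRing.Theory.
Local Open Scope ring_scope.

Section Morph.
Variable gT : finGroupType.
Variables T S : tambara gT.
Unset Implicit Arguments.
Variable f : forall H : {group gT}, tT T H -> tT S H.
Set Implicit Arguments.
Hypothesis hf : is_tmorph f.
Implicit Types (H K L B : {group gT}) (g : gT).

Lemma fhom H : ring_hom (f H). Proof. by case: hf. Qed.
Lemma f_res H K x : (H \subset K)%g -> f H (tres T H K x) = tres S H K (f K x).
Proof. by case: hf => _ h *; apply: h. Qed.
Lemma f_tr H K x : (H \subset K)%g -> f K (ttr T H K x) = ttr S H K (f H x).
Proof. by case: hf => _ _ h *; apply: h. Qed.
Lemma f_nm H K x : (H \subset K)%g -> f K (tnm T H K x) = tnm S H K (f H x).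
Proof. by case: hf => _ _ _ h *; apply: h. Qed.
Lemma f_cj g H K x : (K :=: H :^ g)%g -> f K (tcj T g H K x) = tcj S g H K (f H x).
Proof. by case: hf => _ _ _ _ h *; apply: h. Qed.

Definition img (I : tfam T) : tfam S := fun H y => exists x, I H x /\ y = f H x.

Section Img.
Variable I : tfam T.
Hypothesis hI : is_tideal I.
Lemma img_res H K (y : tT S K) : (H \subset K)%g -> img I y -> img I (tres S H K y).
Proof. by move=> sHK [x [hx ->]]; exists (tres T H K x); rewrite f_res //; split=> //; apply: (idres hI). Qed.
Lemma img_cj g H K (y : tT S H) : (K :=: H :^ g)%g -> img I y -> img I (tcj S g H K y).
Proof. by move=> eK [x [hx ->]]; exists (tcj T g H K x); rewrite f_cj //; split=> //; apply: (idcj hI). Qed.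
Lemma img_nm H K (y : tT S H) : (H \subset K)%g -> img I y -> img I (tnm S H K y).
Proof. by move=> sHK [x [hx ->]]; exists (tnm T H K x); rewrite f_nm //; split=> //; apply: (idnm hI). Qed.
End Img.

Lemma f_atom L0 (Ix : finType) (sd : Ix -> tT T L0) K t : avalid L0 K t ->
  f K (atom sd t K) = atom (fun i => f L0 (sd i)) t K.
Proof.
case: t => [[i B] g] /andP [/= sBK sBL].
by rewrite /atom /= f_nm // f_res // f_cj.
Qed.

End Morph.

End Part9.
Import Part9.

Module Part10.
Set Implicit Arguments. Unset Strict Implicit. Unset Printing Implicit Defensive.
Import GRing.Theory.
Local Open Scope ring_scope.

Lemma arith2 a b n : ((a + b).+1 < n)%N -> (a.+1 <= n)%N /\ (b < n - a.+1)%N.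
Proof. lia. Qed.

Lemma ideal_seq_sum (gT : finGroupType) (T : tambara gT) (C : tfam T) (Lam : Type) H
  (sq : seq (Lam * tT T H)) (P : Lam -> tT T H -> Prop) :
  is_tideal C -> (forall l z, P l z -> C H z) ->
  (forall pr, List.In pr sq -> P pr.1 pr.2) -> C H (\sum_(pr <- sq) pr.2).
Proof.
move=> hC hP; elim: sq => [|pr sq IH] h; first by rewrite big_nil; apply: (id0 hC).
rewrite big_cons; apply: (idD hC); first by apply: (hP pr.1); apply: h; left.
by apply: IH => q hq; apply: h; right.
Qed.

Lemma tsum_0 (gT : finGroupType) (D : tambara gT) (Lam : Type) (G : Lam -> tfam D) H :
  tsum G (0 : tT D H).
Proof. by exists [::]; split=> //; rewrite big_nil. Qed.

Lemma tsum_D (gT : finGroupType) (D : tambara gT) (Lam : Type) (G : Lam -> tfam D) H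
  (x y : tT D H) : tsum G x -> tsum G y -> tsum G (x + y).
Proof.
move=> [s1 [h1 ->]] [s2 [h2 ->]]; exists (s1 ++ s2); split; last by rewrite big_cat.
by move=> p hp; case: (List.in_app_or _ _ _ hp) => h; [exact: h1 | exact: h2].
Qed.

Section Main.
Variable gT : finGroupType.
Variables T S : tambara gT.
Unset Implicit Arguments.
Variable f : forall H : {group gT}, tT T H -> tT S H.
Set Implicit Arguments.
Hypothesis hf : is_tmorph f.

Lemma tphi_rad (I : tfam T) : is_radical_tideal (tphi f I).
Proof.
have hA := tgen_ideal (img f I).
have hR : is_tideal (trad (tpush f I)).
  by apply: trad_ideal => [H|H x y]; [apply: (id0 hA) | apply: (idD hA)].
split=> // H x; split; [exact: (ideal_sub_trad hR) | exact: trad_trad].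
Qed.

Lemma tphi_ideal (I : tfam T) : is_tideal (tphi f I).
Proof. by case: (tphi_rad I). Qed.

Lemma tmeet_ideal (I J : tfam T) : is_tideal I -> is_tideal J -> is_tideal (tmeet I J).
Proof.
move=> hI hJ; split.
- by move=> H; split; apply: id0.
- by move=> H x y [? ?] [? ?]; split; apply: idD.
- by move=> H r x [? ?]; split; apply: idMl.
- by move=> H K x sHK [? ?]; split; apply: idres.
split.
- by move=> H K x sHK [? ?]; split; apply: idtr.
- by move=> H K x sHK [? ?]; split; apply: idnm.
- by move=> g H K x eK [? ?]; split; apply: idcj.
Qed.

Lemma img_mono (I J : tfam T) : fsub I J -> fsub (img f I) (img f J).
Proof. by move=> h H y [x [hx ->]]; exists x; split=> //; apply: h. Qed.

Lemma meet_part (I J : tfam T) : is_tideal I -> is_tideal J ->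
  feq (tphi f (tmeet I J)) (tmeet (tphi f I) (tphi f J)).
Proof.
move=> hI hJ H y; split.
  by move=> hy; split; move: hy; apply: trad_mono; apply: tgen_mono; apply: img_mono => K x [].
case=> [[a ha] [b hb]].
pose sd := fun _ : unit => y.
exists (a + b).+1.
have [r1 c1 m1] := Qj_ideal sd 1.
have hD1 := D_ideal r1 c1 m1.
have h1 : fsub (tgen1 y) (Dfam (Qj sd 1)).
  by apply: tgen1_min => //; apply: DM; exact: (seed_Qj sd tt).
move=> K z hz; have {}hz := tpow_Q hD1 (fsub_refl _) (tpow_mono _ h1 _ _ hz).
have [rN cN mN] := Qj_ideal sd (a + b).+2.
have {}hz := (D_gen rN cN mN z).2 hz.
apply: (tgen_min (tgen_ideal _) _ _ _ hz) => K' q [s [hs v ->]].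
have [ha1 hb1] := arith2 hs.
rewrite -(cat_take_drop a.+1 s) big_cat /=.
have hy1 : forall i, tgen1 y (sd i) by move=> i; apply: tgen1_self.
have hu : tpush f I (\prod_(t <- take a.+1 s) atom sd t K').
  apply: ha; apply: (Qj_tpow (tgen_ideal _) hy1).
  exists (take a.+1 s); split=> //; first by rewrite size_takel.
  by apply/allP => t /mem_take; apply: (allP v).
have hv : tpush f J (\prod_(t <- drop a.+1 s) atom sd t K').
  apply: hb; apply: (Qj_tpow (tgen_ideal _) hy1).
  exists (drop a.+1 s); split=> //; first by rewrite size_drop.
  by apply/allP => t /mem_drop; apply: (allP v).
have hIJ := tmeet_ideal hI hJ.
have hu' := (D_gen (img_res hf hI) (img_cj hf hI) (img_nm hf hI) _).1 hu.
have hv' := (D_gen (img_res hf hJ) (img_cj hf hJ) (img_nm hf hJ) _).1 hv.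
apply: (D_gen (img_res hf hIJ) (img_cj hf hIJ) (img_nm hf hIJ) _).2.
apply: (D_mul (img_res hf hI) (img_res hf hJ) (img_cj hf hJ) _ hu' hv').
move=> L u w [x [hx ->]] [x' [hx' ->]]; exists (x * x'); split.
  by split; [apply: (idMr hI) | apply: (idMl hJ)].
by rewrite (rhM (fhom hf L)).
Qed.

Lemma top_part : feq (tphi f (ttop T)) (ttop S).
Proof.
move=> H y; split=> // _; exists 0%N; apply: (tgen1_min (tgen_ideal _)).
have h1 : tpush f (ttop T) (1 : tT S H).
  by apply: tgen_sub; exists 1; split=> //; rewrite (rh1 (fhom hf H)).
by rewrite -(mulr1 y); apply: (idMl (tgen_ideal _)).
Qed.

Lemma join_part (Lam : Type) (F : Lam -> tfam T) : (forall l, is_tideal (F l)) ->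
  feq (tphi f (tjoin F)) (tjoin (fun l => tphi f (F l))).
Proof.
move=> hF H y.
set W := tjoin F.
set G := fun l => tphi f (F l).
have hRHS : is_tideal (trad (tsum G)).
  by apply: trad_ideal => *; [apply: tsum_0 | apply: tsum_D].
have hLHS := tphi_ideal W.
split.
- move=> hy; apply: trad_trad.
  move: hy; apply: trad_mono.
  apply: tgen_min => // K z [x [hx ->]].
  case: hx => n hn; exists n.
  pose sdS := fun _ : unit => f K x.
  pose sdT := fun _ : unit => x.
  have [r1 c1 m1] := Qj_ideal sdS 1.
  have hD1 := D_ideal r1 c1 m1.
  have h1 : fsub (tgen1 (f K x)) (Dfam (Qj sdS 1)).
    by apply: tgen1_min => //; apply: DM; exact: (seed_Qj sdS tt).
  move=> K1 w hw; have {}hw := tpow_Q hD1 (fsub_refl _) (tpow_mono _ h1 _ _ hw).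
  case: hw => s [v ->].
  apply: (X_sumD (@tsum_0 _ _ _ G) (@tsum_D _ _ _ G) (Qj sdS n.+1)).
  move=> p /v [sp [s1 [hs1 v1 ->]]].
  have eq : \prod_(t <- s1) atom sdS t (tag p) = f (tag p) (\prod_(t <- s1) atom sdT t (tag p)).
    rewrite (rh_prod (fhom hf (tag p))); apply: eq_big_seq => t ts.
    by rewrite (f_atom hf) //; apply: (allP v1).
  have hq : tsum F (\prod_(t <- s1) atom sdT t (tag p)).
    apply: hn; apply: (Qj_tpow (tgen_ideal _) (fun _ => tgen1_self x)).
    by exists s1.
  rewrite eq; case: hq => sq [hsq ->].
  rewrite (rh_sum (fhom hf _)) mulr_sumr tr_sum //.
  exists (map (fun pr => (pr.1, ttr S (tag p) K1 ((tagged p).1 * f (tag p) pr.2))) sq).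
  split; last by rewrite big_map.
  move=> pr hpr; case: (In_map hpr) => pr0 [hpr0 ->] /=.
  have hG' := tphi_ideal (F pr0.1).
  apply: (idtr hG' sp); apply: (idMl hG').
  apply: (ideal_sub_trad (tgen_ideal _)); apply: tgen_sub; exists pr0.2; split=> //.
  exact: hsq.
- move=> hy; apply: trad_trad; move: hy; apply: trad_mono.
  move=> K z [sq [hsq ->]].
  apply: (ideal_seq_sum (P := fun l w => G l K w) hLHS) => // l w.
  apply: trad_mono; apply: tgen_mono; apply: img_mono => K2 u hu.
  exists 0%N; apply: fsub_trans (tgen1_min (hF l) hu) _.
  by move=> K3 u' hu'; exists [:: (l, u')]; split; [move=> pr [<-|//] | rewrite big_seq1].
Qed.

End Main.


End Part10.
Import Part10.



Theorem proposition6p11 (gT : finGroupType) (T S : tambara gT)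
  (f : forall H : {group gT}, tT T H -> tT S H) (hf : is_tmorph f) :
  (* the map is well defined RadId_G(T) -> RadId_G(S) *)
  (forall I : tfam T, is_radical_tideal I -> is_radical_tideal (tphi f I)) /\
  (* arbitrary joins *)
  (forall (Lam : Type) (F : Lam -> tfam T),
     (forall l, is_radical_tideal (F l)) ->
     feq (tphi f (tjoin F)) (tjoin (fun l => tphi f (F l)))) /\
  (* binary meets *)
  (forall I J : tfam T, is_radical_tideal I -> is_radical_tideal J ->
     feq (tphi f (tmeet I J)) (tmeet (tphi f I) (tphi f J))) /\
  (* top element *)
  feq (tphi f (ttop T)) (ttop S).
Proof.
split; first by move=> I _; apply: tphi_rad.
split.
  by move=> Lam F hF; apply: (join_part hf) => l; case: (hF l).
split; last exact: (top_part hf).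
by move=> I J [hI _] [hJ _]; apply: (meet_part hf).
Qed.
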